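(* Let $m\ge4$ be even and let $f:\mathrm{GF}(2^m)\to\mathrm{GF}(2)$ be a bent function with $f(0)=0$; put $n_f=|D_f|$ (so $n_f=2^{m-1}\pm2^{(m-2)/2}$). Then $\mathcal{C}_{D_f}$ is a two-weight binary code with parameters $[n_f,\ m,\ (n_f-2^{(m-2)/2})/2]$, whose nonzero weights are $\frac{n_f}{2}-2^{(m-4)/2}$ with multiplicity $\frac{2^m-1-n_f2^{-(m-2)/2}}{2}$ and $\frac{n_f}{2}+2^{(m-4)/2}$ with multiplicity $\frac{2^m-1+n_f2^{-(m-2)/2}}{2}$.
   Context: $\mathrm{Tr}$ denotes the absolute trace from $\mathrm{GF}(2^m)$ onto $\mathrm{GF}(2)$. For a subset $D=\{d_1,\dots,d_n\}\subseteq\mathrm{GF}(2^m)$ (listed in a fixed order), $\mathcal{C}_D=\{(\mathrm{Tr}(xd_1),\dots,\mathrm{Tr}(xd_n)) : x\in\mathrm{GF}(2^m)\}$, a binary linear code of length $n$. The support of $f$ is $D_f=\{x:f(x)=1\}$. The Walsh transform of $f$ is $\hat f(w)=\sum_{x\in\mathrm{GF}(2^m)}(-1)^{f(x)+\mathrm{Tr}(wx)}$; $f$ is bent if $|\hat f(w)|=2^{m/2}$ for all $w\in\mathrm{GF}(2^m)$. *)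

(* Defs.v *)
From HB Require Import structures.
From mathcomp Require Import all_boot all_order all_algebra all_field.
Set Implicit Arguments. Unset Strict Implicit. Unset Printing Implicit Defensive.
Import Order.TTheory GRing.Theory Num.Theory.
Local Open Scope ring_scope.

(* F plays the role of GF(2^m) (a finite field with #|F| = 2^m). *)

(* Absolute trace GF(2^m) -> GF(2): Tr(x) = x + x^2 + x^4 + ... + x^(2^(m-1)).
   Its values are 0 or 1 in F (the prime subfield GF(2)). *)
Definition Tr (F : finFieldType) (m : nat) (x : F) : F :=
  \sum_(i < m) x ^+ (2 ^ i).

Definition walsh (F : finFieldType) (m : nat) (f : F -> bool) (w : F) : int :=
  \sum_(x : F) ((-1) : int) ^+ (addn (nat_of_bool (f x)) (nat_of_bool (Tr m (w * x) == 1))).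

Definition is_bent (F : finFieldType) (m : nat) (f : F -> bool) : Prop :=
  forall w : F, `|walsh m f w| = (2 ^ m./2)%:Z.

Definition supp (F : finFieldType) (f : F -> bool) : {set F} := [set x | f x].

Definition word (n : nat) := {ffun 'I_n -> bool}.
Definition zero_word (n : nat) : word n := [ffun => false].
Definition wt (n : nat) (c : word n) : nat := #|[set i | c i]|.

(* Codeword of x for D = {d_1,...,d_n}, listed in the fixed order enum D:
   (Tr(x d_1), ..., Tr(x d_n)). *)
Definition codeword (F : finFieldType) (m : nat) (D : {set F}) (x : F)
  : word #|D| := [ffun i => Tr m (x * @enum_val F (mem D) i) == 1].

Definition code (F : finFieldType) (m : nat) (D : {set F}) : {set word #|D|} :=
  [set codeword m D x | x : F].

Definition nz_weights (n : nat) (C : {set word n}) : {set 'I_n.+1} :=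
  [set inord (wt c) | c in C & c != zero_word n].

Definition wmult (n : nat) (C : {set word n}) (w : nat) : nat :=
  #|[set c in C | wt c == w]|.

Definition is_min_dist (n : nat) (C : {set word n}) (d : nat) : Prop :=
  (exists2 c, c \in C & (c != zero_word n) && (wt c == d)) /\
  (forall c, c \in C -> c != zero_word n -> (d <= wt c)%N).

(* Main.v *)
Require Import Defs.
From HB Require Import structures.
From mathcomp Require Import all_boot all_order all_algebra all_field.
From mathcomp Require Import zify ring lra.
Import Order.TTheory GRing.Theory Num.Theory.
Local Open Scope ring_scope.
Set Implicit Arguments. Unset Strict Implicit.


Section Tr.
Variable F : finFieldType.
Variable m : nat.
Hypothesis cardF : #|F| = (2 ^ m)%N.
Hypothesis m_gt0 : (0 < m)%N.

Lemma ch2 : (2%N \in [pchar F]).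
Proof. exact: (card_finPcharP cardF). Qed.

Lemma two0 : (2 : F) = 0.
Proof. by have /andP[_ /eqP] := ch2. Qed.

Lemma oneN0 : (1 : F) != 0. Proof. exact: oner_neq0. Qed.

Lemma frobD i (x y : F) : (x + y) ^+ (2 ^ i) = x ^+ (2 ^ i) + y ^+ (2 ^ i).
Proof.
apply: exprDn_pchar; by rewrite pnatX (pnatE _ (isT : prime 2)) ch2.
Qed.

Lemma TrD (x y : F) : Tr m (x + y) = Tr m x + Tr m y.
Proof. by rewrite /Tr -big_split /=; apply: eq_bigr => i _; rewrite frobD. Qed.

Lemma Tr0 : Tr m (0 : F) = 0.
Proof. by rewrite /Tr big1 // => i _; rewrite expr0n expn_eq0. Qed.

Lemma Tr_sq (x : F) : (Tr m x) ^+ 2 = Tr m x.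
Proof.
rewrite /Tr.
have -> : (\sum_(i < m) x ^+ (2 ^ i)) ^+ 2 = \sum_(i < m) x ^+ (2 ^ i.+1).
  elim: m => [|k IH]; first by rewrite !big_ord0 expr0n.
  rewrite !big_ord_recr /= -[_ ^+ 2]/((pFrobenius_aut ch2) _) rmorphD /=.
  congr (_ + _); first exact: IH.
  by rewrite pFrobenius_autE -exprM expnS mulnC.
have cF : #|F| = (2 ^ m.-1.+1)%N by rewrite prednK.
rewrite -(prednK m_gt0).
rewrite big_ord_recr big_ord_recl /= -cF expf_card expn0 expr1 addrC.
by congr (_ + _); apply: eq_bigr.
Qed.

Lemma Tr01 (x : F) : Tr m x = 0 \/ Tr m x = 1.
Proof.
have /eqP : Tr m x * (Tr m x - 1) = 0 by rewrite mulrBr mulr1 -expr2 Tr_sq subrr.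
by rewrite mulf_eq0 subr_eq0 => /orP[] /eqP; [left|right].
Qed.
End Tr.


Section Tr2.
Variable F : finFieldType.
Variable m : nat.
Hypothesis cardF : #|F| = (2 ^ m)%N.
Hypothesis m_gt0 : (0 < m)%N.

Definition T (x : F) : bool := Tr m x == 1.

Lemma one_one : (1 + 1 : F) = 0.
Proof. by rewrite -(two0 cardF). Qed.

Lemma TD (x y : F) : T (x + y) = T x (+) T y.
Proof.
rewrite /T TrD //.
case: (Tr01 cardF m_gt0 x) => ->; case: (Tr01 cardF m_gt0 y) => ->;
  rewrite ?addr0 ?add0r ?one_one ?eqxx //=; try by rewrite eq_sym oner_eq0.
Qed.

Lemma T0 : T 0 = false.
Proof. by rewrite /T Tr0 eq_sym oner_eq0. Qed.

Lemma Tr_nonzero : exists z : F, T z.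
Proof.
case: (pickP T) => [z Tz|H]; first by exists z.
exfalso.
have H0 (z : F) : Tr m z = 0 by case: (Tr01 cardF m_gt0 z) => // e; have := H z; rewrite /T e eqxx.
pose q : {poly F} := \sum_(i < m) 'X^(2 ^ i).
have qE (z : F) : q.[z] = Tr m z.
  by rewrite /q horner_sum; apply: eq_bigr => i _; rewrite hornerXn.
have q1 : q`_1 = 1.
  rewrite /q coef_sum; case: m m_gt0 => [//|k] _.
  rewrite big_ord_recl /= coefXn expn0 eqxx big1 ?addr0 // => i _.
  by rewrite coefXn /bump /= expnD expn1; case: eqP => //; lia.
have qn0 : q != 0 by apply/eqP => q0; move: q1; rewrite q0 coef0 => /eqP; rewrite eq_sym oner_eq0.
have := max_poly_roots qn0 _ (enum_uniq F).
have -> : all (root q) (enum F) by apply/allP => z _; rewrite /root qE H0.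
move=> /(_ isT).
rewrite -cardE cardF.
have : (size q <= (2 ^ m.-1).+1)%N.
  apply: leq_trans (size_sum _ _ _) _.
  apply/bigmax_leqP => i _; rewrite size_polyXn ltnS leq_pexp2l //.
  by rewrite -ltnS prednK.
have e2 : (2 ^ m = 2 * 2 ^ m.-1)%N by rewrite -expnS prednK.
rewrite e2.
have : (0 < 2 ^ m.-1)%N by rewrite expn_gt0.
move: (2 ^ m.-1)%N (size q) => x s; lia.
Qed.

Lemma sumT : (\sum_(u : F) T u)%N = (2 ^ m.-1)%N.
Proof.
have [z Tz] := Tr_nonzero.
have E : (\sum_(u : F) T u)%N = (\sum_(u : F) ~~ T u)%N.
  rewrite (reindex_inj (addIr z)) /=; apply: eq_bigr => u _.
  by rewrite TD Tz addbT.
have : (\sum_(u : F) T u + \sum_(u : F) ~~ T u)%N = (2 ^ m)%N.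
  rewrite -big_split /= -cardF -sum1_card; apply: eq_bigr => u _.
  by case: (T u).
have e2 : (2 ^ m = 2 * 2 ^ m.-1)%N by rewrite -expnS prednK.
rewrite -E e2; lia.
Qed.

Lemma sumTy (y : F) : y != 0 -> (\sum_(w : F) T (w * y)%R)%N = (2 ^ m.-1)%N.
Proof. move=> y0; rewrite -sumT; symmetry; exact: (reindex_inj (mulIf y0)). Qed.

End Tr2.


Section W.
Variable F : finFieldType.
Variable m : nat.
Hypothesis cardF : #|F| = (2 ^ m)%N.
Hypothesis m_gt0 : (0 < m)%N.
Variable f : F -> bool.

Definition wtx (x : F) : nat := (\sum_(y : F) (f y && T m (x * y)%R))%N.
Definition NN (x : F) : nat := (\sum_(y : F) T m (x * y)%R)%N.

Lemma card_supp : #|supp f| = (\sum_(y : F) f y)%N.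
Proof.
rewrite -sum1_card big_mkcond /=; apply: eq_bigr => y _.
by rewrite /supp inE; case: (f y).
Qed.

Lemma pm1 (a b : bool) : ((-1) : int) ^+ (addn a b) =
  1 - 2 * (a : nat)%:R - 2 * (b : nat)%:R + 4 * ((a && b) : nat)%:R.
Proof. by case: a; case: b. Qed.

Lemma walshE (w : F) : walsh m f w =
  (#|F|)%:R - 2 * (#|supp f|)%:R - 2 * (NN w)%:R + 4 * (wtx w)%:R.
Proof.
rewrite /walsh card_supp /NN /wtx !natr_sum !mulr_sumr -sumr_const -!sumrB -big_split /=.
apply: eq_bigr => y _; rewrite pm1 /T.
by rewrite mulrC.
Qed.

End W.


Lemma QM (x y : nat) : (x * y)%N%:Q = x%:Q * y%:Q.
Proof. by rewrite PoszM intrM. Qed.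
Lemma QD (x y : nat) : (x + y)%N%:Q = x%:Q + y%:Q.
Proof. by rewrite PoszD intrD. Qed.
Lemma QB (x y : nat) : (y <= x)%N -> (x - y)%N%:Q = x%:Q - y%:Q.
Proof. by move=> yx; rewrite -subzn // intrB. Qed.
Lemma Qid1 (k e : nat) : (e <= k)%N -> (k - e)%N%:Q = ((2*k)%N%:Q - (2*e)%N%:Q)/2.
Proof. by move=> ek; rewrite QB // !QM; field. Qed.
Lemma Qid2 (k e : nat) : (e <= k)%N -> (k - e)%N%:Q = (2*k)%N%:Q / 2 - e%:Q.
Proof. by move=> ek; rewrite QB // !QM; field. Qed.
Lemma Qid3 (k e : nat) : (k + e)%N%:Q = (2*k)%N%:Q / 2 + e%:Q.
Proof. by rewrite QD !QM; field. Qed.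
Lemma Qid4 (a b e k : nat) : (0 < e)%N -> (e * a = e * b + k)%N ->
  b%:Q = ((a + b + 1)%N%:Q - 1 - (2 * k)%N%:Q / (2 * e)%N%:Q) / 2.
Proof.
move=> e0 H; have -> : k = (e * a - e * b)%N by lia.
have en : e%:Q != 0 by rewrite intr_eq0 eqz_nat -lt0n.
rewrite !QM QB; last by lia.
by rewrite !QM !QD; field.
Qed.
Lemma Qid5 (a b e k : nat) : (0 < e)%N -> (e * a = e * b + k)%N ->
  a%:Q = ((a + b + 1)%N%:Q - 1 + (2 * k)%N%:Q / (2 * e)%N%:Q) / 2.
Proof.
move=> e0 H; have -> : k = (e * a - e * b)%N by lia.
have en : e%:Q != 0 by rewrite intr_eq0 eqz_nat -lt0n.
rewrite !QM QB; last by lia.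
by rewrite !QM !QD; field.
Qed.

Section Main.
Variable F : finFieldType.
Variable m : nat.
Hypothesis cardF : #|F| = (2 ^ m)%N.
Hypothesis m4 : (4 <= m)%N.
Hypothesis evm : ~~ odd m.
Variable f : F -> bool.
Hypothesis bent : is_bent m f.
Hypothesis f0 : f 0 = false.

Let m_gt0 : (0 < m)%N. Proof. by apply: leq_trans m4. Qed.
Let h := m./2.
Let e := (2 ^ (h - 2))%N.
Let E := (e * e)%N.
Let n := #|supp f|.

Lemma m_hh : m = (h + h)%N.
Proof. have := odd_double_half m; rewrite (negbTE evm) add0n -addnn /h; lia. Qed.

Lemma h2 : (2 <= h)%N. Proof. have := m_hh; lia. Qed.

Lemma pow_h : (2 ^ h = 4 * e)%N.
Proof. by rewrite /e -(expnD 2 2) subnKC // h2. Qed.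

Lemma pow_m : (2 ^ m = 16 * E)%N.
Proof. by rewrite m_hh expnD pow_h /E; lia. Qed.

Lemma pow_m1 : (2 ^ m.-1 = 8 * E)%N.
Proof.
have : (2 ^ m = 2 * 2 ^ m.-1)%N by rewrite -expnS prednK.
rewrite pow_m; lia.
Qed.

Lemma e_gt0 : (0 < e)%N. Proof. by rewrite expn_gt0. Qed.
Lemma e_le_E : (e <= E)%N. Proof. by rewrite /E leq_pmull // e_gt0. Qed.

Lemma wtx0 : wtx m f 0 = 0%N.
Proof. by rewrite /wtx big1 // => y _; rewrite mul0r T0 ?andbF. Qed.
Lemma NN0 : NN m (0 : F) = 0%N.
Proof. by rewrite /NN big1 // => y _; rewrite mul0r T0. Qed.
Lemma NNw (w : F) : w != 0 -> NN m w = (8 * E)%N.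
Proof.
move=> w0; rewrite /NN -pow_m1 -(sumTy cardF m_gt0 w0).
by apply: eq_bigr => y _; rewrite mulrC.
Qed.

Lemma bentw (w : F) : `|walsh m f w| = (4 * e)%N%:Z.
Proof. by rewrite bent pow_h. Qed.

Lemma n_val : exists k, n = (2 * k)%N /\ (k = 4 * E + e \/ k + e = 4 * E)%N.
Proof.
have := bentw 0; rewrite walshE NN0 wtx0 cardF pow_m -/n.
case/orP: (leqVgt n (8 * E)) => H.
  by exists (4 * E - e)%N; lia.
by exists (4 * E + e)%N; lia.
Qed.


Lemma wt_vals k (w : F) : n = (2 * k)%N -> w != 0 -> (wtx m f w + e = k \/ wtx m f w = k + e)%N.
Proof.
move=> nk w0; have := bentw w; rewrite walshE (NNw w0) cardF pow_m -/n nk; lia.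
Qed.

Lemma sum_wt : (\sum_(w : F) wtx m f w)%N = (n * (8 * E))%N.
Proof.
rewrite /wtx exchange_big /= /n card_supp big_distrl /=.
apply: eq_bigr => y _; case fy: (f y) => /=; last by rewrite mul0n big1.
have y0 : y != 0 by apply: contraTneq fy => ->; rewrite f0.
by rewrite mul1n -pow_m1 -(sumTy cardF m_gt0 y0).
Qed.


Section K.
Variable k : nat.
Hypothesis nk : n = (2 * k)%N.
Hypothesis kv : (k = 4 * E + e \/ k + e = 4 * E)%N.

Definition cntA := (\sum_(w : F) (wtx m f w == k + e))%N.
Definition cntB := (\sum_(w : F) (wtx m f w == k - e))%N.

Lemma pointw (w : F) : (((w != 0%R :> F) : nat) = (wtx m f w == k - e) + (wtx m f w == k + e))%N /\
   (wtx m f w = (k - e) * (wtx m f w == k - e) + (k + e) * (wtx m f w == k + e))%N.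
Proof.
have ep := e_gt0; have eE := e_le_E.
case: (eqVneq w 0) => [->|w0]; first by rewrite wtx0 /=; lia.
by case: (wt_vals nk w0) => /=; lia.
Qed.

Lemma cntAB : (cntA + cntB = 16 * E - 1)%N /\ ((k - e) * cntB + (k + e) * cntA = 2 * k * (8 * E))%N.
Proof.
split.
  have -> : (16 * E - 1 = \sum_(w : F) (w != 0%R :> F))%N.
    rewrite -big_mkcond /= sum1_card cardC1 cardF pow_m; lia.
  rewrite /cntA /cntB -big_split /=; apply: eq_bigr => w _.
  by rewrite addnC (proj1 (pointw w)).
rewrite -nk -sum_wt /cntA /cntB !big_distrr -big_split /=.
apply: eq_bigr => w _; rewrite {3}(proj2 (pointw w)); lia.
Qed.

End K.

Let D := supp f.

Lemma card_set_sum (I : finType) (P : pred I) : #|[set x | P x]| = (\sum_(x : I) P x)%N.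
Proof.
rewrite -sum1_card big_mkcond /=; apply: eq_bigr => y _.
by rewrite inE; case: (P y).
Qed.

Lemma wt_cw (x : F) : wt (codeword m D x) = wtx m f x.
Proof.
rewrite /wt (card_set_sum (fun i => codeword m D x i)) /wtx.
rewrite (eq_bigr (fun i => T m (x * enum_val i)%R : nat)); last by move=> i _; rewrite ffunE.
rewrite -(big_enum_val (fun y => T m (x * y)%R : nat)) /= big_mkcond /=.
by apply: eq_bigr => y _; rewrite /D /supp inE; case: (f y).
Qed.

Lemma cw0 : codeword m D 0 = zero_word #|D|.
Proof. by apply/ffunP => i; rewrite !ffunE mul0r Tr0 eq_sym oner_eq0. Qed.

Lemma cw_inj : injective (codeword m D).
Proof.
move=> x y Exy.
have H d : d \in D -> T m (x * d) = T m (y * d).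
  move=> dD; have := congr1 (fun c : word #|D| => c (enum_rank_in dD d)) Exy.
  by rewrite /= !ffunE enum_rankK_in.
apply/eqP; apply/negPn/negP => nxy.
have yy : y + y = 0 by rewrite -{1 2}[y]mul1r -mulrDl (one_one cardF) mul0r.
have z0 : x + y != 0.
  apply: contra nxy => /eqP H0; apply/eqP.
  by rewrite -[x]addr0 -yy addrA H0 add0r.
have w0 : wtx m f (x + y) = 0%N.
  rewrite /wtx big1 // => d _; case fd: (f d) => //=.
  rewrite mulrDl (TD cardF m_gt0) (H d) ?addbb //.
  by rewrite /D /supp inE.
have [k [nk kv]] := n_val.
have ep := e_gt0; have eE := e_le_E.
case: (wt_vals nk z0); rewrite w0; lia.
Qed.


Lemma wmult_cnt w : wmult (code m D) w = (\sum_(x : F) (wtx m f x == w))%N.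
Proof.
rewrite /wmult -(card_set_sum (fun x => wtx m f x == w)).
rewrite -[in RHS](card_imset _ cw_inj); apply: eq_card => c; rewrite inE; apply/andP/imsetP.
  by case=> /imsetP[x _ ->]; rewrite wt_cw => hw; exists x; rewrite // inE.
case=> x; rewrite inE => hw ->; split; first exact: imset_f.
by rewrite wt_cw hw.
Qed.

Lemma cw_nz (x : F) : codeword m D x != zero_word #|D| -> x != 0.
Proof. by apply: contraNneq => ->; rewrite cw0. Qed.

Lemma main_sec :
  let D := supp f in
  let n := #|D| in
  let C := code m D in
  (* length n (by construction), dimension m: 2^m codewords *)
  #|C| = (2 ^ m)%N /\
  (exists d : nat, is_min_dist C d /\
     d%:Q = (n%:Q - (2 ^ (m - 2)./2)%N%:Q) / 2) /\
  (exists w1 w2 : nat,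
     w1 != w2 /\
     nz_weights C = [set inord w1; inord w2] /\
     w1%:Q = n%:Q / 2 - (2 ^ (m - 4)./2)%N%:Q /\
     w2%:Q = n%:Q / 2 + (2 ^ (m - 4)./2)%N%:Q /\
     (wmult C w1)%:Q = (((2 ^ m)%N%:Q - 1) - n%:Q / (2 ^ (m - 2)./2)%N%:Q) / 2 /\
     (wmult C w2)%:Q = (((2 ^ m)%N%:Q - 1) + n%:Q / (2 ^ (m - 2)./2)%N%:Q) / 2).
Proof.
move=> D0 n0 C0; subst D0 n0 C0.
rewrite -/D -/n.
have [k [nk kv]] := n_val.
have ep := e_gt0; have eE := e_le_E.
have [sAB sW] := cntAB nk kv.
set a := cntA k in sAB sW; set b := cntB k in sAB sW.
have eEE : (E <= e * E)%N by rewrite leq_pmull.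
have keq : (e * a = e * b + k)%N.
  have ke : (e <= k)%N by lia.
  have [k' kk] : exists k', k = (k' + e)%N by exists (k - e)%N; lia.
  have s1 : (a + b + 1 = 16 * E)%N by lia.
  have := congr1 (muln k) s1; move: sW; rewrite kk addnK; lia.
have bpos : (0 < b)%N.
  case: (posnP b) => // b0; rewrite b0 in keq sAB.
  have a1 : a = (16 * E - 1)%N by lia.
  move: keq; rewrite a1 mulnBr muln1; lia.
have apos : (0 < a)%N.
  case: (posnP a) => // a0; rewrite a0 in keq; lia.
have [xB hB] : exists x, wtx m f x = (k - e)%N.
  case: (pickP (fun x => wtx m f x == (k - e)%N)) => [x /eqP hx|H]; first by exists x.
  by move: bpos; rewrite /b /cntB big1 // => x _; rewrite H.
have [xA hA] : exists x, wtx m f x = (k + e)%N.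
  case: (pickP (fun x => wtx m f x == (k + e)%N)) => [x /eqP hx|H]; first by exists x.
  by move: apos; rewrite /a /cntA big1 // => x _; rewrite H.
have p2 : (2 ^ (m - 2)./2 = 2 * e)%N.
  have -> : (m - 2 = (h - 1) + (h - 1))%N by rewrite {1}m_hh; lia.
  rewrite addnn doubleK /e -expnS; congr (_ ^ _)%N; have := h2; lia.
have p4 : (2 ^ (m - 4)./2 = e)%N.
  have -> : (m - 4 = (h - 2) + (h - 2))%N by rewrite {1}m_hh; lia.
  by rewrite addnn doubleK.
have cwnz x : wtx m f x != 0%N -> codeword m D x != zero_word #|D|.
  by move=> hx; apply: contra hx => /eqP H; rewrite -wt_cw H -cw0 wt_cw wtx0.
have en0 : (e%:Q != 0) by rewrite pnatr_eq0 -lt0n.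
split.
  by rewrite /code card_imset; last exact: cw_inj.
split.
  exists (k - e)%N; split.
    split.
      exists (codeword m D xB); first exact: imset_f.
      by rewrite wt_cw hB eqxx andbT cwnz // hB; lia.
    move=> c /imsetP[x _ ->] cnz; have x0 := cw_nz cnz.
    by rewrite wt_cw; case: (wt_vals nk x0); lia.
  by rewrite p2 nk; apply: Qid1; lia.
exists (k - e)%N, (k + e)%N; split; first by lia.
split.
  apply/setP => i; apply/imsetP/idP.
    case=> c; rewrite inE => /andP[/imsetP[x _ ->] cnz] ->; have x0 := cw_nz cnz.
    rewrite wt_cw in_set2; case: (wt_vals nk x0) => hw.
      have hw' : wtx m f x = (k - e)%N by lia.
      by rewrite hw' eqxx.
    by rewrite hw eqxx orbT.
  rewrite in_set2 => /orP[] /eqP ->.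
    exists (codeword m D xB); last by rewrite wt_cw hB.
    by rewrite inE imset_f //= cwnz // hB; lia.
  exists (codeword m D xA); last by rewrite wt_cw hA.
  by rewrite inE imset_f //= cwnz // hA; lia.
rewrite !wmult_cnt -/(cntA k) -/(cntB k) -/a -/b p4 p2 pow_m nk.
have -> : (16 * E)%N = (a + b + 1)%N by lia.
split; first by apply: Qid2; lia.
split; first exact: Qid3.
split; [exact: Qid4 ep keq | exact: Qid5 ep keq].
Qed.

End Main.
Unset Implicit Arguments.

Theorem mainTheorem7 (F : finFieldType) (m : nat) (f : F -> bool) :
  #|F| = (2 ^ m)%N -> (4 <= m)%N -> ~~ odd m ->
  is_bent m f -> f 0 = false ->
  let D := supp f in
  let n := #|D| in
  let C := code m D in
  (* length n (by construction), dimension m: 2^m codewords *)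
  #|C| = (2 ^ m)%N /\
  (* minimum distance (n - 2^((m-2)/2)) / 2 *)
  (exists d : nat, is_min_dist C d /\
     d%:Q = (n%:Q - (2 ^ (m - 2)./2)%N%:Q) / 2) /\
  (* exactly two nonzero weights w1 <> w2, with the given values and multiplicities *)
  (exists w1 w2 : nat,
     w1 != w2 /\
     nz_weights C = [set inord w1; inord w2] /\
     w1%:Q = n%:Q / 2 - (2 ^ (m - 4)./2)%N%:Q /\
     w2%:Q = n%:Q / 2 + (2 ^ (m - 4)./2)%N%:Q /\
     (wmult C w1)%:Q = (((2 ^ m)%N%:Q - 1) - n%:Q / (2 ^ (m - 2)./2)%N%:Q) / 2 /\
     (wmult C w2)%:Q = (((2 ^ m)%N%:Q - 1) + n%:Q / (2 ^ (m - 2)./2)%N%:Q) / 2).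
Proof.
move=> cF m4 ev b f0; exact: (main_sec cF m4 ev b f0).
Qed.
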